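(* For a non-negative integer $n$ and real $x>0$ small, define $$A_n(x)=2\ln(n!\,x)+\ln|\Gamma(-n-x)|+\ln|\Gamma(-n+x)|-x^2\sum_{k=1}^n\frac1{k^2}.$$ Then for every non-negative integer $n$, $$\lim_{x\to0^+}\frac{1}{x^2}\left[1-\frac{A_n(x)}{A_{n+1}(x)}\right]=\frac{3}{(n+1)^4\pi^2}=\frac{1}{2(n+1)^4\zeta(2)}.$$
   Context: $\Gamma$ is Euler's Gamma function on the real line and $\zeta$ is the Riemann zeta function. *)

(* Defs.v *)
From Stdlib Require Import Reals Lra Arith Factorial.
From Coquelicot Require Import Coquelicot.
Open Scope R_scope.

Definition Gamma_int (x : R) : R :=
  RInt_gen (fun t => Rpower t (x - 1) * exp (- t)) (at_right 0) (Rbar_locally p_infty).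

Fixpoint rising (x : R) (m : nat) : R :=
  match m with O => 1 | S m' => rising x m' * (x + INR m') end.

(* Euler's Gamma function on the real line: the integral for x > 0, and the
   usual continuation via Γ(x) = Γ(x+m) / (x(x+1)...(x+m-1)) for x <= 0,
   with m = up(-x) so that x + m > 0 (value irrelevant at the poles). *)
Definition Gamma (x : R) : R :=
  if Rlt_dec 0 x then Gamma_int x
  else let m := Z.to_nat (up (- x)) in
       Gamma_int (x + INR m) / rising x m.

Definition zeta (s : R) : R := Series (fun k => / Rpower (INR k + 1) s).

Definition A (n : nat) (x : R) : R :=
  2 * ln (INR (Factorial.fact n) * x) + ln (Rabs (Gamma (- INR n - x)))
  + ln (Rabs (Gamma (- INR n + x)))
  - x ^ 2 * sum_n_m (fun k => / (INR k) ^ 2) 1 n.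

(* Main.v *)
Require Import Defs.
From Stdlib Require Import Reals Lra Lia ZArith Nsatz.
From Coquelicot Require Import Coquelicot.
Open Scope R_scope.

Lemma cont_of_der (f : R -> R) x : ex_derive f x -> continuous f x.
Proof. apply (ex_derive_continuous (K:=R_AbsRing) (V:=R_NormedModule)). Qed.

Definition pw (z t : R) : R := if Rlt_dec 0 t then Rpower t z else 0.

Lemma pw_pos z t : 0 < t -> pw z t = Rpower t z.
Proof. intros; unfold pw; destruct Rlt_dec; lra. Qed.
Lemma pw_npos z t : t <= 0 -> pw z t = 0.
Proof. intros; unfold pw; destruct Rlt_dec; lra. Qed.
Lemma pw_ge0 z t : 0 <= pw z t.
Proof. unfold pw; destruct Rlt_dec. unfold Rpower; apply Rlt_le, exp_pos. lra. Qed.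

Lemma small_pow z eps : 0 < z -> 0 < eps -> exists d, 0 < d /\ forall h, 0 < h < d -> Rpower h z < eps.
Proof.
intros Hz He. exists (exp (ln eps / z)). split. apply exp_pos.
intros h [H1 H2]. unfold Rpower.
rewrite <- (exp_ln eps He). apply exp_increasing.
apply ln_increasing in H2; auto. rewrite ln_exp in H2.
apply Rmult_lt_reg_l with (/ z). apply Rinv_0_lt_compat; auto.
replace (/ z * (ln eps)) with (ln eps / z) by (unfold Rdiv; ring).
replace (/ z * (z * ln h)) with (ln h) by (field; lra). auto.
Qed.

Lemma pw_der_pos z t : 0 < t -> is_derive (pw z) t (z * Rpower t (z - 1)).
Proof.
intros Ht. apply is_derive_ext_loc with (fun y => Rpower y z).
- apply locally_interval with 0 p_infty. simpl; auto. simpl; auto.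
  intros y Hy _. simpl in Hy. rewrite pw_pos; auto.
- apply is_derive_Reals. apply derivable_pt_lim_power; auto.
Qed.

Lemma pw_der_neg z t : t < 0 -> is_derive (pw z) t 0.
Proof.
intros Ht. apply is_derive_ext_loc with (fun y => 0).
- apply locally_interval with m_infty 0. simpl; auto. simpl; auto.
  intros y _ Hy. simpl in Hy. rewrite pw_npos; auto. lra.
- apply (is_derive_const (K:=R_AbsRing) (V:=R_NormedModule)).
Qed.

Lemma Rpower_S1 t z : 0 < t -> Rpower t (z + 1) = t * Rpower t z.
Proof. intros; rewrite Rpower_plus, Rpower_1; auto; ring. Qed.

Lemma pw_S1 t z : pw (z + 1) t = t * pw z t.
Proof. destruct (Rlt_dec 0 t). rewrite !pw_pos, Rpower_S1; auto. rewrite !pw_npos; lra. Qed.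

Lemma pw_cont z t : 0 < z -> continuous (pw z) t.
Proof.
intros Hz. destruct (Rtotal_order t 0) as [Ht|[Ht|Ht]].
- apply cont_of_der. eexists; apply pw_der_neg; auto.
- subst t. apply continuity_pt_filterlim. intros eps He.
  destruct (small_pow z eps Hz He) as [d [Hd Hp]].
  exists d. split; auto. intros y [_ Hy]. rewrite (pw_npos z 0) by lra. simpl in *. unfold R_dist in *.
  rewrite ?Rminus_0_r in *.
  destruct (Rlt_dec 0 y). rewrite pw_pos; auto. rewrite Rabs_right.
  apply Hp. rewrite Rabs_right in Hy; lra. apply Rle_ge. unfold Rpower; apply Rlt_le, exp_pos.
  rewrite pw_npos, Rabs_R0; lra.
- apply cont_of_der. eexists; apply pw_der_pos; auto.
Qed.

Lemma pw_der z t : 0 < z -> is_derive (pw (z + 1)) t ((z + 1) * pw z t).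
Proof.
intros Hz. destruct (Rtotal_order t 0) as [Ht|[Ht|Ht]].
- rewrite pw_npos by lra. rewrite Rmult_0_r. apply pw_der_neg; auto.
- subst t. rewrite pw_npos by lra. rewrite Rmult_0_r.
  apply is_derive_Reals. intros eps He.
  destruct (small_pow z eps Hz He) as [d [Hd Hp]].
  exists (mkposreal d Hd). intros h Hh0 Hh. simpl in Hh.
  rewrite (pw_npos _ 0) by lra. rewrite Rplus_0_l.
  destruct (Rlt_dec 0 h).
  + rewrite pw_S1. replace ((h * pw z h - 0) / h - 0) with (pw z h) by (field; lra).
    rewrite pw_pos; auto. rewrite Rabs_right. apply Hp. rewrite Rabs_right in Hh; lra.
    apply Rle_ge. unfold Rpower; apply Rlt_le, exp_pos.
  + rewrite pw_npos by lra. replace ((0 - 0) / h - 0) with 0 by (field; lra).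
    rewrite Rabs_R0; lra.
- rewrite pw_pos by auto. replace (Rpower t z) with (Rpower t (z + 1 - 1)) by (f_equal; ring).
  apply pw_der_pos; auto.
Qed.

Lemma pw_scale z a u : 0 < a -> pw z (a * u) = Rpower a z * pw z u.
Proof.
intros Ha. destruct (Rlt_dec 0 u).
- rewrite !pw_pos; auto. rewrite Rpower_mult_distr; auto. apply Rmult_lt_0_compat; auto.
- rewrite !pw_npos. ring. lra. nra.
Qed.

Lemma pw_le z t : 0 <= z <= 3 -> 0 <= t -> pw z t <= 1 + t ^ 3.
Proof.
intros Hz Ht. destruct (Rlt_dec 0 t).
2: { rewrite pw_npos by lra. generalize (pow_le t 3 Ht); lra. }
rewrite pw_pos by auto.
destruct (Rle_dec t 1).
- assert (Rpower t z <= 1).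
  { unfold Rpower. rewrite <- exp_0.
    assert (ln t <= 0). rewrite <- ln_1. destruct (Req_dec t 1). subst; lra.
    apply Rlt_le, ln_increasing; lra.
    assert (z * ln t <= 0) by nra.
    destruct (Rle_lt_or_eq_dec _ _ H0). apply Rlt_le, exp_increasing; auto. rewrite e; lra. }
  generalize (pow_le t 3 Ht); lra.
- assert (Rpower t z <= Rpower t 3). apply Rle_Rpower; lra.
  replace (Rpower t 3) with (t ^ 3) in H. lra.
  replace 3 with (INR 3) by (simpl; ring). rewrite Rpower_pow; auto.
Qed.
Lemma exR_cont (f : R -> R) a b : (forall z, Rmin a b <= z <= Rmax a b -> continuous f z) -> ex_RInt f a b.
Proof. exact (ex_RInt_continuous (V:=R_CompleteNormedModule) f a b). Qed.
Lemma isR_der (f df : R -> R) a b :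
  (forall x : R, Rmin a b <= x <= Rmax a b -> is_derive f x (df x)) ->
  (forall x : R, Rmin a b <= x <= Rmax a b -> continuous df x) ->
  is_RInt df a b (f b - f a).
Proof. exact (is_RInt_derive (V:=R_CompleteNormedModule) f df a b). Qed.
Lemma isR_der' (f df g : R -> R) a b v :
  (forall x : R, Rmin a b <= x <= Rmax a b -> is_derive f x (df x)) ->
  (forall x : R, Rmin a b <= x <= Rmax a b -> continuous df x) ->
  (forall x, Rmin a b < x < Rmax a b -> df x = g x) ->
  f b - f a = v ->
  is_RInt g a b v.
Proof.
intros H1 H2 H3 H4. subst v. eapply is_RInt_ext. exact H3. apply isR_der; auto.
Qed.
Lemma RInt_cor (f : R -> R) a b : ex_RInt f a b -> is_RInt f a b (RInt f a b).
Proof. exact (RInt_correct (V:=R_CompleteNormedModule) f a b). Qed.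

Definition g (z t : R) : R := pw z t * exp (- t).
Definition F (z b : R) : R := RInt (g z) 0 b.

Lemma g_cont z t : 0 < z -> continuous (g z) t.
Proof.
intros Hz. unfold g.
apply (continuous_mult (K:=R_AbsRing) (pw z) (fun t => exp (- t))).
apply pw_cont; auto. apply cont_of_der; auto_derive; auto.
Qed.

Lemma exg z a b : 0 < z -> ex_RInt (g z) a b.
Proof. intros; apply exR_cont; intros; apply g_cont; auto. Qed.

Lemma g_ge0 z t : 0 <= g z t.
Proof. unfold g. apply Rmult_le_pos. apply pw_ge0. apply Rlt_le, exp_pos. Qed.

Lemma exp_ge1x x : 1 + x <= exp x.
Proof. destruct (Req_dec x 0). subst; rewrite exp_0; lra. apply Rlt_le, exp_ineq1; auto. Qed.

Lemma g_le z t : 0 < z <= 3 -> 0 <= t -> g z t <= 217 * exp (- t / 2).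
Proof.
intros Hz Ht. unfold g.
assert (H1 := pw_le z t ltac:(lra) Ht).
assert (H2 : exp (t / 2) = exp (t/6) * exp (t/6) * exp (t/6)).
{ rewrite <- !exp_plus. f_equal. field. }
assert (H3 := exp_ge1x (t/6)).
assert (H4 : t ^ 3 <= 216 * exp (t / 2)).
{ rewrite H2. assert (0 <= t/6) by lra.
  assert (t/6 <= exp (t/6)) by lra.
  assert (t/6 * (t/6) <= exp (t/6) * exp (t/6)) by (apply Rmult_le_compat; lra).
  assert (t/6 * (t/6) * (t/6) <= exp (t/6) * exp (t/6) * exp (t/6)).
  apply Rmult_le_compat; try lra. nra. simpl. nra. }
assert (H5 : 1 <= exp (t / 2)). { rewrite <- exp_0. destruct (Req_dec t 0). subst. 
  replace (0/2) with 0 by field. lra. apply Rlt_le, exp_increasing. lra. }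
assert (E : exp (- t) = exp (- t / 2) * exp (- t / 2)) by (rewrite <- exp_plus; f_equal; field).
assert (E2 : exp (t / 2) * exp (- t / 2) = 1) by (rewrite <- exp_plus, <- exp_0; f_equal; field).
rewrite E.
assert (0 < exp (- t / 2)) by apply exp_pos.
apply Rle_trans with ((1 + t ^ 3) * (exp (- t / 2) * exp (- t / 2))).
apply Rmult_le_compat_r; auto. apply Rlt_le, Rmult_lt_0_compat; auto.
apply Rle_trans with ((217 * exp (t / 2)) * (exp (- t / 2) * exp (- t / 2))).
apply Rmult_le_compat_r. apply Rlt_le, Rmult_lt_0_compat; auto. lra.
replace (217 * exp (t / 2) * (exp (- t / 2) * exp (- t / 2))) with
  (217 * (exp (t / 2) * exp (- t / 2)) * exp (- t / 2)) by ring.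
rewrite E2. lra.
Qed.

Lemma F_bound z b : 0 < z <= 3 -> 0 <= b -> 0 <= F z b <= 434.
Proof.
intros Hz Hb. unfold F. split.
- apply (is_RInt_le (fun _ => 0) (g z) 0 b 0 (RInt (g z) 0 b)); auto.
  apply (isR_der' (fun _ => 0) (fun _ => 0)); intros; try ring.
  apply (is_derive_const (K:=R_AbsRing) (V:=R_NormedModule)). apply continuous_const.
  apply RInt_cor, exg; lra.
  intros; apply g_ge0.
- apply Rle_trans with (434 - 434 * exp (- b / 2)).
  apply (is_RInt_le (g z) (fun t => 217 * exp (- t / 2)) 0 b); auto.
  apply RInt_cor, exg; lra.
  apply (isR_der' (fun t => - 434 * exp (- t / 2)) (fun t => 217 * exp (- t / 2))).
  intros; auto_derive. auto. unfold Rdiv. field.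
  intros; apply cont_of_der; auto_derive; auto.
  intros; auto.
  replace (- 0 / 2) with 0 by field. rewrite exp_0. ring.
  intros. apply g_le; lra.
  generalize (exp_pos (- b / 2)); lra.
Qed.

Lemma F_chasles z a b : 0 < z -> F z b = F z a + RInt (g z) a b.
Proof.
intros Hz. unfold F. rewrite <- (RInt_Chasles (g z) 0 a b); auto; apply exg; auto.
Qed.

Lemma F_mono z a b : 0 < z -> a <= b -> F z a <= F z b.
Proof.
intros Hz Hab. rewrite (F_chasles z a b Hz).
assert (0 <= RInt (g z) a b).
{ apply (is_RInt_le (fun _ => 0) (g z) a b 0 (RInt (g z) a b)); auto.
  apply (isR_der' (fun _ => 0) (fun _ => 0)); intros; try ring.
  apply (is_derive_const (K:=R_AbsRing) (V:=R_NormedModule)). apply continuous_const.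
  apply RInt_cor, exg; lra.
  intros; apply g_ge0. }
lra.
Qed.

Definition Gs z := real (Lim_seq (fun N => F z (INR N))).

Lemma F_incr z : 0 < z -> forall n, F z (INR n) <= F z (INR (S n)).
Proof. intros Hz n; apply F_mono; auto. rewrite S_INR; lra. Qed.

Lemma Gs_lim z : 0 < z <= 3 -> is_lim_seq (fun N => F z (INR N)) (Gs z).
Proof.
intros Hz. assert (H : ex_finite_lim_seq (fun N => F z (INR N))).
{ apply ex_finite_lim_seq_incr with 434. apply F_incr; lra.
  intros; apply F_bound; auto. apply pos_INR. }
unfold Gs. destruct H as [l Hl]. rewrite (is_lim_seq_unique _ _ Hl). simpl. auto.
Qed.

Lemma nat_above b : exists N : nat, b < INR N.
Proof.
destruct (archimed (Rabs b)) as [H1 H2].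
exists (Z.to_nat (up (Rabs b))).
rewrite INR_IZR_INZ, Z2Nat.id. generalize (Rle_abs b); lra.
apply le_IZR. generalize (Rabs_pos b); lra.
Qed.

Lemma F_le_Gs z b : 0 < z <= 3 -> 0 <= b -> F z b <= Gs z.
Proof.
intros Hz Hb. destruct (nat_above b) as [N HN].
apply Rle_trans with (F z (INR N)). apply F_mono; lra.
apply (is_lim_seq_incr_compare _ _ (Gs_lim z Hz)). apply F_incr; lra.
Qed.

Lemma Gs_ge0 z : 0 < z <= 3 -> 0 <= Gs z.
Proof. intros. apply Rle_trans with (F z 0). apply F_bound; lra. apply F_le_Gs; lra. Qed.

Lemma F_near_Gs z eps : 0 < z <= 3 -> 0 < eps -> exists M, 0 <= M /\ forall b, M < b -> Rabs (F z b - Gs z) < eps.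
Proof.
intros Hz He. assert (H := Gs_lim z Hz). apply is_lim_seq_spec in H.
destruct (H (mkposreal eps He)) as [N HN]. exists (INR N). split. apply pos_INR.
intros b Hb. assert (H1 := HN N (Nat.le_refl N)). simpl in H1.
assert (F z (INR N) <= F z b) by (apply F_mono; lra).
assert (F z b <= Gs z) by (apply F_le_Gs; auto; generalize (pos_INR N); lra).
rewrite Rabs_left1 in H1 |- *; lra.
Qed.

Lemma rising_shift x m : rising x (S m) = x * rising (x + 1) m.
Proof.
induction m. simpl. ring.
change (rising x (S (S m))) with (rising x (S m) * (x + INR (S m))).
rewrite IHm. simpl rising. rewrite S_INR. ring.
Qed.

Lemma rising_pos x m : 0 < x -> 0 < rising x m.
Proof.
intros Hx. induction m. simpl; lra. simpl. apply Rmult_lt_0_compat; auto.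
generalize (pos_INR m); lra.
Qed.

Definition beta (z : R) (N : nat) : R := RInt (fun u => pw z u * (1 - u) ^ N) 0 1.

Lemma exbeta z N a b : 0 < z -> ex_RInt (fun u => pw z u * (1 - u) ^ N) a b.
Proof.
intros Hz. apply exR_cont; intros.
apply (continuous_mult (K:=R_AbsRing) (pw z) (fun u => (1 - u) ^ N)).
apply pw_cont; auto. apply cont_of_der; auto_derive; auto.
Qed.

Lemma RInt_lin2 (f g : R -> R) (a b c d v : R) :
  ex_RInt f c d -> ex_RInt g c d ->
  is_RInt (fun x => a * f x - b * g x) c d v -> v = 0 ->
  a * RInt f c d - b * RInt g c d = 0.
Proof.
intros Hf Hg H Hv; subst v.
assert (H2 : is_RInt (fun x => a * f x - b * g x) c d (a * RInt f c d - b * RInt g c d)).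
{ apply (is_RInt_minus (fun x => a * f x) (fun x => b * g x)).
  apply (is_RInt_scal f c d a); exact (RInt_correct f c d Hf).
  apply (is_RInt_scal g c d b); exact (RInt_correct g c d Hg). }
rewrite <- (is_RInt_unique _ _ _ _ H2). apply (is_RInt_unique _ _ _ _ H).
Qed.

Lemma Rpower_1_base y : Rpower 1 y = 1.
Proof. unfold Rpower. rewrite ln_1, Rmult_0_r, exp_0. auto. Qed.

Lemma der_mult (f h : R -> R) x df dh : is_derive f x df -> is_derive h x dh ->
  is_derive (fun t => f t * h t) x (df * h x + f x * dh).
Proof. intros. apply (is_derive_mult (K:=R_AbsRing) f h x df dh); auto. intros; apply Rmult_comm. Qed.

Lemma der_const (c x : R) : is_derive (fun _ => c) x 0.
Proof. apply (is_derive_const (K:=R_AbsRing) (V:=R_NormedModule)). Qed.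

Lemma beta0 w : 0 < w -> beta w 0 = / (w + 1).
Proof.
intros Hw. unfold beta. apply is_RInt_unique.
apply (isR_der' (fun u => pw (w + 1) u * / (w + 1)) (fun u => (w + 1) * pw w u * / (w + 1) + pw (w+1) u * 0)).
- intros. apply (der_mult (pw (w+1)) (fun _ => / (w+1))). apply pw_der; auto. apply der_const.
- intros. apply (continuous_plus (V:=R_NormedModule)).
  apply (continuous_mult (K:=R_AbsRing) (fun u => (w + 1) * pw w u) (fun _ => / (w+1))).
  apply (continuous_mult (K:=R_AbsRing) (fun _ => (w + 1)) (pw w)).
  apply continuous_const. apply pw_cont; auto. apply continuous_const.
  apply (continuous_mult (K:=R_AbsRing) (pw (w + 1)) (fun _ => 0)).
  apply pw_cont; lra. apply continuous_const.
- intros. simpl. field. lra.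
- rewrite pw_pos, pw_npos, Rpower_1_base by lra. field. lra.
Qed.

Lemma cont_pwpoly z N x : 0 < z -> continuous (fun u => pw z u * (1 - u) ^ N) x.
Proof.
intros. apply (continuous_mult (K:=R_AbsRing) (pw z) (fun u => (1 - u) ^ N)).
apply pw_cont; auto. apply cont_of_der; auto_derive; auto.
Qed.

Lemma INR_S_match k : match k with 0%nat => 1 | S _ => INR k + 1 end = INR (S k).
Proof. reflexivity. Qed.

Lemma beta_rec z N : 0 < z -> (z + 1) * beta z (S N) - INR (S N) * beta (z + 1) N = 0.
Proof.
intros Hz. unfold beta. eapply RInt_lin2 with (v := 0). apply exbeta; auto. apply exbeta; lra.
apply (isR_der' (fun u => pw (z + 1) u * (1 - u) ^ (S N))
   (fun u => (z + 1) * pw z u * (1 - u) ^ (S N) + pw (z + 1) u * (INR (S N) * (-1) * (1 - u) ^ N))).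
- intros. apply (der_mult (pw (z+1)) (fun u => (1 - u) ^ (S N))). apply pw_der; auto.
  auto_derive; auto. rewrite INR_S_match. replace (1 + - x) with (1 - x) by ring. ring.
- intros. apply (continuous_plus (V:=R_NormedModule)).
  apply (continuous_mult (K:=R_AbsRing) (fun u => (z + 1) * pw z u) (fun u => (1 - u) ^ (S N))).
  apply (continuous_mult (K:=R_AbsRing) (fun _ => (z + 1)) (pw z)).
  apply continuous_const. apply pw_cont; auto. apply cont_of_der; auto_derive; auto.
  apply (continuous_mult (K:=R_AbsRing) (pw (z + 1)) (fun u => INR (S N) * (-1) * (1 - u) ^ N)).
  apply pw_cont; lra. apply cont_of_der; auto_derive; auto.
- intros. simpl. rewrite INR_S_match. ring.
- rewrite (pw_npos _ 0) by lra. simpl. ring.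
- reflexivity.
Qed.

Lemma beta_closed N : forall z, 0 < z -> beta z N = INR (fact N) / rising (z + 1) (S N).
Proof.
induction N; intros z Hz.
- rewrite beta0; auto. simpl. field. lra.
- assert (H := beta_rec z N Hz). rewrite IHN in H by lra.
  assert (Hr := rising_pos (z + 1 + 1) (S N) ltac:(lra)).
  rewrite rising_shift. 
  apply Rmult_eq_reg_l with (z + 1). 2: lra.
  replace ((z + 1) * beta z (S N)) with (INR (S N) * (INR (fact N) / rising (z + 1 + 1) (S N))) by lra.
  rewrite fact_simpl, mult_INR. field. lra.
Qed.


Definition Ir (z : R) (n : nat) : R := RInt (fun t => pw z t * (1 - t / INR n) ^ n) 0 (INR n).

Lemma Ir_beta z n : 0 < z -> (1 <= n)%nat -> Ir z n = Rpower (INR n) (z + 1) * beta z n.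
Proof.
intros Hz Hn. assert (HN : 0 < INR n) by (apply lt_0_INR; lia).
set (Nr := INR n) in *.
set (f := fun t => pw z t * (1 - t / Nr) ^ n).
assert (EX : ex_RInt f (Nr * 0 + 0) (Nr * 1 + 0)).
{ apply exR_cont; intros. unfold f.
  apply (continuous_mult (K:=R_AbsRing) (pw z) (fun t => (1 - t / Nr) ^ n)).
  apply pw_cont; auto. apply cont_of_der; auto_derive; auto. }
assert (E := RInt_comp_lin f Nr 0 0 1 EX).
replace (Nr * 0 + 0) with 0 in E by ring. replace (Nr * 1 + 0) with Nr in E by ring.
unfold Ir. fold Nr. fold f. rewrite <- E.
rewrite Rpower_S1 by auto. unfold beta.
rewrite (RInt_ext _ (fun y => (Nr * Rpower Nr z) * (pw z y * (1 - y) ^ n))).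
- apply (RInt_scal (V:=R_CompleteNormedModule)). apply exbeta; auto.
- intros x _. unfold f. simpl. rewrite Rplus_0_r. rewrite pw_scale by auto.
  replace (1 - Nr * x / Nr) with (1 - x) by (field; lra). unfold scal; simpl. unfold mult; simpl. ring.
Qed.

Lemma exp_pow x n : exp x ^ n = exp (INR n * x).
Proof.
induction n. simpl. rewrite Rmult_0_l, exp_0; auto.
simpl pow. rewrite IHn, S_INR, <- exp_plus. f_equal; ring.
Qed.

Lemma bern v n : 0 <= v <= 1 -> 1 - INR n * v <= (1 - v) ^ n.
Proof.
intros Hv. induction n. simpl; lra.
simpl pow. rewrite S_INR.
assert (0 <= (1 - v) ^ n) by (apply pow_le; lra).
assert (0 <= INR n) by apply pos_INR.
nra.
Qed.

Lemma diff_bound n t : (1 <= n)%nat -> 0 <= t <= INR n ->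
  (1 - t / INR n) ^ n <= exp (- t) /\ exp (- t) - (1 - t / INR n) ^ n <= t ^ 2 * exp (- t) / INR n.
Proof.
intros Hn Ht. assert (HN : 0 < INR n) by (apply lt_0_INR; lia).
set (s := t / INR n).
assert (Hs : 0 <= s <= 1).
{ unfold s; split. apply Rdiv_le_0_compat; lra. apply Rmult_le_reg_r with (INR n); auto.
  unfold Rdiv; rewrite Rmult_assoc, Rinv_l; lra. }
assert (Ets : t = INR n * s) by (unfold s; field; lra).
split.
- rewrite Ets. rewrite Ropp_mult_distr_r, <- exp_pow.
  apply pow_incr. split. lra. generalize (exp_ge1x (- s)); lra.
- assert (H1 : (1 + s) ^ n <= exp t).
  { rewrite Ets, <- exp_pow. apply pow_incr. generalize (exp_ge1x s); lra. }
  assert (H2 : 1 - INR n * (s * s) <= (1 - s * s) ^ n) by (apply bern; nra).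
  assert (H3 : (1 + s) ^ n * (1 - s) ^ n = (1 - s * s) ^ n).
  { rewrite <- Rpow_mult_distr. f_equal. ring. }
  assert (H4 : 0 <= (1 - s) ^ n) by (apply pow_le; lra).
  assert (H5 : 1 - INR n * (s * s) <= exp t * (1 - s) ^ n).
  { apply Rle_trans with ((1 + s) ^ n * (1 - s) ^ n). lra. apply Rmult_le_compat_r; auto. }
  assert (E1 : exp t * exp (- t) = 1) by (rewrite <- exp_plus, <- exp_0; f_equal; ring).
  assert (E2 : INR n * (s * s) = t ^ 2 / INR n) by (rewrite Ets; field; lra).
  rewrite E2 in H5.
  assert (Hp := exp_pos (- t)).
  replace (exp (- t) - (1 - s) ^ n) with (exp (- t) * (1 - exp t * (1 - s) ^ n)).
  2: { replace (exp (- t) * (1 - exp t * (1 - s) ^ n)) with (exp (- t) - (exp t * exp (- t)) * (1 - s) ^ n) by ring.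
       rewrite E1; ring. }
  replace (t ^ 2 * exp (- t) / INR n) with (exp (- t) * (t ^ 2 / INR n)) by (field; lra).
  apply Rmult_le_compat_l; lra.
Qed.

Lemma pw_S2 z t : pw (z + 2) t = t ^ 2 * pw z t.
Proof.
replace (z + 2) with (z + 1 + 1) by ring. rewrite !pw_S1. ring.
Qed.

Lemma lim_c_over_n c : is_lim_seq (fun n => c / INR n) 0.
Proof.
assert (H := is_lim_seq_inv _ _ is_lim_seq_INR ltac:(discriminate)).
apply (is_lim_seq_scal_l _ c) in H. simpl in H. rewrite Rmult_0_r in H. exact H.
Qed.

Lemma Ir_F z n : 0 < z <= 1 -> (1 <= n)%nat ->
  F z (INR n) - 434 / INR n <= Ir z n <= F z (INR n).
Proof.
intros Hz Hn. assert (HN : 0 < INR n) by (apply lt_0_INR; lia).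
set (h := fun t => pw z t * (1 - t / INR n) ^ n).
assert (Eh : ex_RInt h 0 (INR n)).
{ apply exR_cont; intros. unfold h.
  apply (continuous_mult (K:=R_AbsRing) (pw z) (fun t => (1 - t / INR n) ^ n)).
  apply pw_cont; lra. apply cont_of_der; auto_derive; auto. }
assert (Ih := RInt_cor _ _ _ Eh). fold h in Ih. change (RInt h 0 (INR n)) with (Ir z n) in Ih.
assert (Ig := RInt_cor _ _ _ (exg z 0 (INR n) ltac:(lra))). change (RInt (g z) 0 (INR n)) with (F z (INR n)) in Ig.
assert (Ig2 := RInt_cor _ _ _ (exg (z + 2) 0 (INR n) ltac:(lra))). change (RInt (g (z + 2)) 0 (INR n)) with (F (z + 2) (INR n)) in Ig2.
assert (HF2 := F_bound (z + 2) (INR n) ltac:(lra) ltac:(lra)).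
split.
- assert (Isum : is_RInt (fun t => h t + / INR n * g (z + 2) t) 0 (INR n) (Ir z n + / INR n * F (z + 2) (INR n))).
  { apply (is_RInt_plus h (fun t => / INR n * g (z + 2) t)). auto.
    apply (is_RInt_scal (g (z + 2)) 0 (INR n) (/ INR n)). auto. }
  assert (F z (INR n) <= Ir z n + / INR n * F (z + 2) (INR n)).
  { apply (is_RInt_le (g z) (fun t => h t + / INR n * g (z + 2) t) 0 (INR n)); auto. lra.
    intros t Ht. unfold h, g. rewrite pw_S2.
    destruct (diff_bound n t Hn ltac:(lra)) as [_ H2].
    assert (0 <= pw z t) by apply pw_ge0.
    assert (pw z t * (exp (- t) - (1 - t / INR n) ^ n) <= pw z t * (t ^ 2 * exp (- t) / INR n)).
    apply Rmult_le_compat_l; auto.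
    replace (/ INR n * (t ^ 2 * pw z t * exp (- t))) with (pw z t * (t ^ 2 * exp (- t) / INR n)) by (field; lra).
    lra. }
  assert (/ INR n * F (z + 2) (INR n) <= 434 / INR n).
  { unfold Rdiv. rewrite Rmult_comm. apply Rmult_le_compat_r. apply Rlt_le, Rinv_0_lt_compat; auto. lra. }
  lra.
- apply (is_RInt_le h (g z) 0 (INR n)); auto. lra.
  intros t Ht. unfold h, g. apply Rmult_le_compat_l. apply pw_ge0.
  apply (diff_bound n t Hn ltac:(lra)).
Qed.

Definition gauss (z : R) (n : nat) : R := Rpower (INR n) (z + 1) * (INR (fact n) / rising (z + 1) (S n)).

Lemma gauss_lim z : 0 < z <= 1 -> is_lim_seq (gauss z) (Gs z).
Proof.
intros Hz.
apply is_lim_seq_le_le_loc with (fun n => F z (INR n) - 434 / INR n) (fun n => F z (INR n)).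
- exists 1%nat. intros n Hn. unfold gauss. rewrite <- beta_closed by lra. rewrite <- Ir_beta by (auto; lra).
  apply Ir_F; auto.
- assert (H := is_lim_seq_minus' _ _ _ _ (Gs_lim z ltac:(lra)) (lim_c_over_n 434)).
  rewrite Rminus_0_r in H. exact H.
- apply Gs_lim; lra.
Qed.

Lemma at_right_delta (Q : R -> Prop) d : 0 < d -> (forall a, 0 < a < d -> Q a) -> at_right 0 Q.
Proof.
intros Hd HQ. exists (mkposreal d Hd). intros y Hy Hy0. apply HQ. split; auto.
unfold ball in Hy; simpl in Hy. unfold AbsRing_ball, abs, minus, plus, opp in Hy; simpl in Hy.
rewrite Ropp_0, Rplus_0_r in Hy. rewrite Rabs_right in Hy; lra.
Qed.

Lemma F_small z a : 0 < z <= 1 -> 0 <= a <= 1 -> F z a <= 2 * a.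
Proof.
intros Hz Ha. unfold F.
apply (is_RInt_le (g z) (fun _ => 2) 0 a); auto. lra.
apply RInt_cor, exg; lra.
apply (isR_der' (fun t => 2 * t) (fun _ => 2)); intros; try (simpl; ring).
auto_derive; auto. ring. apply continuous_const.
intros t Ht. unfold g. assert (H1 := pw_le z t ltac:(lra) ltac:(lra)).
assert (exp (- t) <= 1). { rewrite <- exp_0. apply Rlt_le, exp_increasing; lra. }
assert (t ^ 3 <= 1). { simpl. assert (t*t <= 1) by nra. nra. }
assert (0 <= pw z t) by apply pw_ge0. nra.
Qed.

Lemma exp_small eps : 0 < eps -> exists M, forall b, M < b -> exp (- b / 2) < eps.
Proof.
intros He. exists (- 2 * ln eps). intros b Hb. rewrite <- (exp_ln eps He).
apply exp_increasing. lra.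
Qed.

Lemma cont_Rpower y t : 0 < t -> continuous (fun t => Rpower t y) t.
Proof. intros. apply cont_of_der. eexists. apply is_derive_Reals, derivable_pt_lim_power; auto. Qed.

Lemma is_RInt_val (f : R -> R) a b v v' : is_RInt f a b v -> v = v' -> is_RInt f a b v'.
Proof. intros H E; subst; auto. Qed.

Lemma is_derive_val (f : R -> R) x l l' : is_derive f x l -> l = l' -> is_derive f x l'.
Proof. intros H E; subst; auto. Qed.

Definition Hf w t := Rpower t w * exp (- t).

Lemma IBP_seg w a b : 0 < w < 1 -> 0 < a < b ->
  is_RInt (fun t => Rpower t (w - 1) * exp (- t)) a b ((Hf w b - Hf w a + RInt (g w) a b) / w).
Proof.
intros Hw Hab.
set (D := fun t => w * Rpower t (w - 1) * exp (- t) - Rpower t w * exp (- t)).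
assert (H1 : is_RInt D a b (Hf w b - Hf w a)).
{ apply (isR_der (Hf w) D).
  - intros t Ht. rewrite Rmin_left, Rmax_right in Ht by lra. unfold Hf, D.
    eapply is_derive_val.
    apply (der_mult (fun t => Rpower t w) (fun t => exp (- t)) t (w * Rpower t (w-1)) (- exp (- t))).
    apply is_derive_Reals, derivable_pt_lim_power; lra. auto_derive; auto; ring.
    simpl. ring.
  - intros t Ht. rewrite Rmin_left, Rmax_right in Ht by lra. unfold D.
    apply (continuous_minus (V:=R_NormedModule)).
    apply (continuous_mult (K:=R_AbsRing) (fun t => w * Rpower t (w - 1)) (fun t => exp (- t))).
    apply (continuous_mult (K:=R_AbsRing) (fun _ => w) (fun t => Rpower t (w - 1))).
    apply continuous_const. apply cont_Rpower; lra. apply cont_of_der; auto_derive; auto.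
    apply (continuous_mult (K:=R_AbsRing) (fun t => Rpower t w) (fun t => exp (- t))).
    apply cont_Rpower; lra. apply cont_of_der; auto_derive; auto. }
assert (H2 := RInt_cor _ _ _ (exg w a b ltac:(lra))).
assert (H3 := is_RInt_plus _ _ _ _ _ _ H1 H2).
assert (H4 := is_RInt_scal _ _ _ (/ w) _ H3).
eapply is_RInt_val. eapply is_RInt_ext. 2: exact H4.
- intros t Ht. rewrite Rmin_left, Rmax_right in Ht by lra. unfold D, g. rewrite pw_pos by lra.
  unfold scal, plus; simpl. unfold mult; simpl. field. lra.
- unfold scal, plus; simpl. unfold mult; simpl. field. lra.
Qed.

Lemma ball_R (x y : R) (eps : posreal) : Rabs (y - x) < eps -> ball x eps y.
Proof. intros H. unfold ball; simpl. unfold AbsRing_ball, abs, minus, plus, opp; simpl. exact H. Qed.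

Lemma Gamma_int_val w : 0 < w < 1 -> Gamma_int w = Gs w / w.
Proof.
intros Hw. unfold Gamma_int. apply is_RInt_gen_unique.
unfold is_RInt_gen.
apply filterlimi_lim_ext_loc with
  (fun ab => (Hf w (snd ab) - Hf w (fst ab) + RInt (g w) (fst ab) (snd ab)) / w).
- apply Filter_prod with (fun a => 0 < a < 1) (fun b => 1 < b).
  apply at_right_delta with 1; auto; lra.
  exists 1; auto.
  intros a b Ha Hb. simpl. apply IBP_seg; lra.
- intros P [eps HP].
  set (e := eps * w / 4).
  assert (He : 0 < e) by (unfold e; generalize (cond_pos eps); nra).
  destruct (small_pow w e ltac:(lra) He) as [d1 [Hd1 Hp1]].
  destruct (F_near_Gs w e ltac:(lra) He) as [M1 [_ HM1]].
  destruct (exp_small (e / 217) ltac:(lra)) as [M2 HM2].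
  set (d := Rmin 1 (Rmin d1 (e / 2))).
  assert (Hd : 0 < d) by (unfold d; repeat apply Rmin_pos; lra).
  apply Filter_prod with (fun a => 0 < a < d) (fun b => Rmax 1 (Rmax M1 M2) < b).
  + apply at_right_delta with d; auto.
  + exists (Rmax 1 (Rmax M1 M2)); auto.
  + intros a b Ha Hb. apply HP. apply ball_R. simpl.
    assert (d <= 1) by (unfold d; apply Rmin_l).
    assert (d <= d1) by (unfold d; eapply Rle_trans; [apply Rmin_r | apply Rmin_l]).
    assert (d <= e / 2) by (unfold d; eapply Rle_trans; [apply Rmin_r | apply Rmin_r]).
    assert (1 < b) by (eapply Rle_lt_trans; [apply Rmax_l | exact Hb]).
    assert (M1 < b) by (eapply Rle_lt_trans; [eapply Rle_trans; [apply Rmax_l | apply Rmax_r] | exact Hb]).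
    assert (M2 < b) by (eapply Rle_lt_trans; [eapply Rle_trans; [apply Rmax_r | apply Rmax_r] | exact Hb]).
    simpl.
    assert (EC : RInt (g w) a b = F w b - F w a) by (rewrite (F_chasles w a b); lra).
    assert (A1 : 0 <= Hf w a < e).
    { unfold Hf. assert (0 < Rpower a w) by apply exp_pos.
      assert (exp (- a) <= 1) by (rewrite <- exp_0; apply Rlt_le, exp_increasing; lra).
      assert (0 < exp (- a)) by apply exp_pos.
      assert (Rpower a w < e) by (apply Hp1; lra). split. nra. nra. }
    assert (A2 : 0 <= Hf w b < e).
    { assert (Hf w b = g w b) by (unfold Hf, g; rewrite pw_pos; lra).
      rewrite H5. split. apply g_ge0. apply Rle_lt_trans with (217 * exp (- b / 2)).
      apply g_le; lra. assert (exp (- b / 2) < e / 217) by (apply HM2; lra). lra. }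
    assert (A3 : 0 <= F w a < e).
    { split. apply F_bound; lra. apply Rle_lt_trans with (2 * a). apply F_small; lra. lra. }
    assert (A4 := HM1 b H3).
    assert (X : Rabs (Hf w b - Hf w a + RInt (g w) a b - Gs w) < 4 * e).
    { rewrite EC. apply Rabs_def1; apply Rabs_def2 in A4; lra. }
    replace ((Hf w b - Hf w a + RInt (g w) a b) / w - Gs w / w) with
      ((Hf w b - Hf w a + RInt (g w) a b - Gs w) * / w) by (field; lra).
    rewrite Rabs_mult, Rabs_inv, (Rabs_right w) by lra.
    apply Rmult_lt_reg_r with w. lra. rewrite Rmult_assoc, Rinv_l, Rmult_1_r by lra.
    replace (eps * w) with (4 * e) by (unfold e; field). exact X.
Qed.

Lemma ln_le_x1 y : 0 < y -> ln y <= y - 1.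
Proof.
intros Hy. destruct (Rle_or_lt (ln y) (y - 1)) as [H|H]; auto.
apply exp_increasing in H. rewrite exp_ln in H by auto. generalize (exp_ge1x (y - 1)); lra.
Qed.

Lemma mln_bounds u : 0 <= u < 1 -> u <= - ln (1 - u) <= u / (1 - u).
Proof.
intros Hu. split.
- generalize (ln_le_x1 (1 - u) ltac:(lra)); lra.
- rewrite <- ln_Rinv by lra. assert (H := ln_le_x1 (/ (1 - u)) ltac:(apply Rinv_0_lt_compat; lra)).
  replace (u / (1 - u)) with (/ (1 - u) - 1) by (field; lra). auto.
Qed.

Fixpoint Qp (x : R) (N : nat) : R :=
  match N with O => 1 | S N' => Qp x N' * (1 - x ^ 2 / (INR N' + 1) ^ 2) end.

Lemma Qp_bounds x N : 0 < x < 1 -> 0 < Qp x N <= 1.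
Proof.
intros Hx. induction N. simpl; lra. change (Qp x (S N)) with (Qp x N * (1 - x ^ 2 / (INR N + 1) ^ 2)).
assert (0 <= INR N) by apply pos_INR.
assert (x ^ 2 / (INR N + 1) ^ 2 <= x ^ 2).
{ unfold Rdiv. rewrite <- (Rmult_1_r (x ^ 2)) at 2. apply Rmult_le_compat_l. nra.
  rewrite <- Rinv_1. apply Rinv_le_contravar. lra. nra. }
assert (0 < x ^ 2 / (INR N + 1) ^ 2). { apply Rdiv_lt_0_compat; nra. }
assert (x^2 < 1) by nra. destruct IHN. set (u := x ^ 2 / (INR N + 1) ^ 2) in *. split. apply Rmult_lt_0_compat; lra. nra.
Qed.

Lemma rising_Q x N : rising (x + 1) N * rising (1 - x) N = INR (fact N) ^ 2 * Qp x N.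
Proof.
induction N. simpl. ring.
simpl rising. change (Qp x (S N)) with (Qp x N * (1 - x ^ 2 / (INR N + 1) ^ 2)). rewrite fact_simpl, mult_INR, S_INR.
replace (rising (x + 1) N * (x + 1 + INR N) * (rising (1 - x) N * (1 - x + INR N)))
  with (rising (x + 1) N * rising (1 - x) N * ((x + 1 + INR N) * (1 - x + INR N))) by ring.
rewrite IHN. assert (0 <= INR N) by apply pos_INR. field. lra.
Qed.

Lemma Rpower3 n : 0 < n -> Rpower n 3 = n ^ 3.
Proof. intros. replace 3 with (INR 3) at 1 by (simpl; ring). apply Rpower_pow; auto. Qed.

Lemma gauss_prod x N : 0 < x < 1 -> (1 <= N)%nat ->
  gauss x N * gauss (1 - x) N / (1 - x) =
  INR N ^ 3 / ((INR N + 1 + x) * (INR N + 1 - x) * (INR N + 2 - x)) * / Qp x N.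
Proof.
intros Hx HN. assert (Hn : 0 < INR N) by (apply lt_0_INR; lia).
unfold gauss.
assert (E1 : Rpower (INR N) (x + 1) * Rpower (INR N) (1 - x + 1) = INR N ^ 3).
{ rewrite <- Rpower_plus. replace (x + 1 + (1 - x + 1)) with 3 by ring. apply Rpower3; auto. }
assert (E2 : (1 - x) * rising (1 - x + 1) (S N) = rising (1 - x) N * (1 - x + INR N) * (1 - x + INR N + 1)).
{ rewrite <- rising_shift. simpl rising. rewrite INR_S_match. rewrite S_INR. ring. }
assert (E3 : rising (x + 1) (S N) = rising (x + 1) N * (x + 1 + INR N)) by reflexivity.
assert (HQ := rising_Q x N). assert (Q := Qp_bounds x N Hx).
assert (R1 := rising_pos (x + 1) N ltac:(lra)). assert (R2 := rising_pos (1 - x) N ltac:(lra)).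
assert (R3 := rising_pos (1 - x + 1) (S N) ltac:(lra)). assert (R4 := rising_pos (x + 1) (S N) ltac:(lra)).
assert (F0 : 0 < INR (fact N)) by (apply lt_0_INR, lt_O_fact).
replace (Rpower (INR N) (x + 1) * (INR (fact N) / rising (x + 1) (S N)) *
   (Rpower (INR N) (1 - x + 1) * (INR (fact N) / rising (1 - x + 1) (S N))) / (1 - x))
 with ((Rpower (INR N) (x + 1) * Rpower (INR N) (1 - x + 1)) * INR (fact N) ^ 2 /
   (rising (x + 1) (S N) * ((1 - x) * rising (1 - x + 1) (S N)))) by (field; lra).
rewrite E1, E2, E3.
replace (rising (x + 1) N * (x + 1 + INR N) * (rising (1 - x) N * (1 - x + INR N) * (1 - x + INR N + 1)))
  with ((rising (x + 1) N * rising (1 - x) N) * ((x + 1 + INR N) * (1 - x + INR N) * (1 - x + INR N + 1))) by ring.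
rewrite HQ. field. repeat split; lra.
Qed.

Lemma lim_1_plus c : is_lim_seq (fun n => 1 + c / INR n) 1.
Proof.
assert (H := is_lim_seq_plus' _ _ _ _ (is_lim_seq_const 1) (lim_c_over_n c)).
rewrite Rplus_0_r in H. exact H.
Qed.

Lemma Vlim x : 0 < x < 1 -> is_lim_seq (fun N => / Qp x N) (x * Gamma_int x * Gamma_int (1 - x)).
Proof.
intros Hx.
assert (L1 := gauss_lim x ltac:(lra)). assert (L2 := gauss_lim (1 - x) ltac:(lra)).
assert (L3 := is_lim_seq_mult' _ _ _ _ L1 L2).
assert (L4 := is_lim_seq_scal_r _ (/ (1 - x)) _ L3). simpl in L4.
assert (L5 := is_lim_seq_mult' _ _ _ _ (lim_1_plus (1 + x)) (lim_1_plus (1 - x))).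
assert (L6 := is_lim_seq_mult' _ _ _ _ L5 (lim_1_plus (2 - x))).
assert (L7 := is_lim_seq_mult' _ _ _ _ L4 L6).
rewrite Gamma_int_val, Gamma_int_val by lra.
replace (x * (Gs x / x) * (Gs (1 - x) / (1 - x))) with (Gs x * Gs (1 - x) * / (1 - x) * (1 * 1 * 1)) by (field; lra).
apply is_lim_seq_ext_loc with (2 := L7).
exists 1%nat. intros N HN. assert (Hn : 0 < INR N) by (apply lt_0_INR; lia).
assert (E := gauss_prod x N Hx HN). unfold Rdiv in E.
assert (Q := Qp_bounds x N Hx).
rewrite E.
field. repeat split; try lra.
Qed.









Definition Ib n : R := RInt (fun x => cos x ^ (2*n)) 0 (PI/2).
Definition Jb n : R := RInt (fun x => x^2 * cos x ^ (2*n)) 0 (PI/2).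

Lemma exI n : ex_RInt (fun x => cos x ^ (2*n)) 0 (PI/2).
Proof. apply exR_cont; intros; apply cont_of_der; auto_derive; auto. Qed.
Lemma exJ n : ex_RInt (fun x => x^2 * cos x ^ (2*n)) 0 (PI/2).
Proof. apply exR_cont; intros; apply cont_of_der; auto_derive; auto. Qed.

Lemma derI (n : nat) (x : R) : is_derive (fun x => sin x * cos x ^ (2*n+1)) x
  ((2 * INR n + 2) * cos x ^ (2*(S n)) - (2 * INR n + 1) * cos x ^ (2*n)).
Proof.
auto_derive; auto.
replace (n + (n+0) + 1)%nat with (S (2*n)) by lia. simpl pred.
replace (2 * S n)%nat with (S (S (2*n))) by lia.
rewrite S_INR, mult_INR. simpl INR.
rewrite <- !tech_pow_Rmult.
set (P := cos x ^ (2*n)).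
assert (Hs := sin2_cos2 x). unfold Rsqr in Hs.
nsatz.
Qed.

Lemma I_rec n : (2 * INR n + 2) * Ib (S n) = (2 * INR n + 1) * Ib n.
Proof.
apply Rminus_diag_uniq.
eapply RInt_lin2. apply exI. apply exI.
apply (isR_der (fun x => sin x * cos x ^ (2*n+1))).
- intros; apply derI.
- intros; apply cont_of_der; auto_derive; auto.
- rewrite cos_PI2, sin_0. rewrite pow_i by lia. ring.
Qed.



Lemma derJ (n : nat) (x : R) : is_derive
  (fun x => x * cos x ^ (2 * S n) + (INR n + 1) * x^2 * sin x * cos x ^ (2*n+1)) x
  (cos x ^ (2 * S n) + (2 * (INR n + 1)^2) * (x^2 * cos x ^ (2 * S n))
    - ((INR n + 1) * (2 * INR n + 1)) * (x^2 * cos x ^ (2*n))).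
Proof.
auto_derive; auto.
rewrite ?INR_S_match.
replace (n + S (n+0))%nat with (S (2*n)) by lia.
replace (n + (n+0))%nat with (2*n)%nat by lia.
replace (2 * S n)%nat with (S (S (2*n))) by lia.
replace (2 * n + 1)%nat with (S (2*n)) by lia.
simpl pred.
rewrite ?S_INR, ?mult_INR. simpl INR.
rewrite <- !tech_pow_Rmult.
set (P := cos x ^ (2*n)).
assert (Hs := sin2_cos2 x). unfold Rsqr in Hs.
nsatz.
Qed.

Lemma RInt_lin3 (f g h : R -> R) (a b c lo hi v : R) :
  ex_RInt f lo hi -> ex_RInt g lo hi -> ex_RInt h lo hi ->
  is_RInt (fun x => a * f x + b * g x - c * h x) lo hi v -> v = 0 ->
  a * RInt f lo hi + b * RInt g lo hi - c * RInt h lo hi = 0.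
Proof.
intros Hf Hg Hh H Hv; subst v.
assert (H2 : is_RInt (fun x => a * f x + b * g x - c * h x) lo hi
   (a * RInt f lo hi + b * RInt g lo hi - c * RInt h lo hi)).
{ apply (is_RInt_minus (fun x => a * f x + b * g x) (fun x => c * h x)).
  apply (is_RInt_plus (fun x => a * f x) (fun x => b * g x)).
  apply (is_RInt_scal f lo hi a); exact (RInt_correct f lo hi Hf).
  apply (is_RInt_scal g lo hi b); exact (RInt_correct g lo hi Hg).
  apply (is_RInt_scal h lo hi c); exact (RInt_correct h lo hi Hh). }
rewrite <- (is_RInt_unique _ _ _ _ H2). apply (is_RInt_unique _ _ _ _ H).
Qed.

Lemma J_rec n : 1 * Ib (S n) + (2 * (INR n + 1)^2) * Jb (S n)
   - ((INR n + 1) * (2 * INR n + 1)) * Jb n = 0.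
Proof.
unfold Ib, Jb.
eapply RInt_lin3. apply exI. apply exJ. apply exJ.
eapply is_RInt_ext.
2: apply (isR_der (fun x => x * cos x ^ (2 * S n) + (INR n + 1) * x^2 * sin x * cos x ^ (2*n+1))
  (fun x => cos x ^ (2 * S n) + (2 * (INR n + 1)^2) * (x^2 * cos x ^ (2 * S n))
    - ((INR n + 1) * (2 * INR n + 1)) * (x^2 * cos x ^ (2*n)))).
- intros x _. simpl. ring.
- intros; apply derJ.
- intros; apply cont_of_der; auto_derive; auto.
- rewrite cos_PI2, sin_0. rewrite !pow_i by lia. ring.
Qed.

Lemma I0 : Ib 0 = PI / 2.
Proof.
unfold Ib. apply is_RInt_unique.
apply (isR_der' (fun x => x) (fun x => 1)).
- intros; auto_derive; auto.
- intros; apply continuous_const.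
- intros; simpl; reflexivity.
- ring.
Qed.

Lemma J0 : Jb 0 = PI ^ 3 / 24.
Proof.
unfold Jb. apply is_RInt_unique.
apply (isR_der' (fun x => x ^ 3 / 3) (fun x => x ^ 2)).
- intros; auto_derive; [auto | field].
- intros; apply cont_of_der; auto_derive; auto.
- intros; simpl; ring.
- field.
Qed.

Lemma I_rec' n : Ib (S n) = (2 * INR n + 1) / (2 * INR n + 2) * Ib n.
Proof.
assert (H := I_rec n). assert (0 <= INR n) by apply pos_INR.
apply Rmult_eq_reg_l with (2 * INR n + 2). rewrite H. field. lra. lra.
Qed.

Lemma Ib_pos n : 0 < Ib n.
Proof.
induction n.
- rewrite I0. generalize PI_RGT_0; lra.
- assert (0 <= INR n) by apply pos_INR.
  rewrite I_rec'. apply Rmult_lt_0_compat; auto. apply Rdiv_lt_0_compat; lra.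
Qed.

Lemma x_le_3sin x : 0 <= x <= PI / 2 -> x <= 3 * sin x.
Proof.
intros Hx. assert (H := sin_bound x 0). 
assert (Hp := PI_4).
destruct H as [H _]; try lra.
unfold sin_approx, sin_term in H. simpl in H.
assert (x <= 2) by lra.
nra.
Qed.

Lemma Jb_bounds n : 0 <= Jb n <= 9 * (Ib n - Ib (S n)).
Proof.
assert (HP := PI_RGT_0).
split.
- assert (H0 : is_RInt (fun _ => 0) 0 (PI/2) 0).
  { apply (isR_der' (fun _ => 0) (fun _ => 0)); intros; try ring.
    auto_derive; auto. apply continuous_const. }
  apply (is_RInt_le (fun _ => 0) (fun x => x^2 * cos x ^ (2*n)) 0 (PI/2)). lra. exact H0.
  exact (RInt_correct _ _ _ (exJ n)).
  intros x Hx. apply Rmult_le_pos. apply pow2_ge_0.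
  replace (2 * n)%nat with (n * 2)%nat by lia. rewrite pow_mult. apply pow2_ge_0.
- unfold Jb, Ib.
  assert (H : is_RInt (fun x => 9 * (cos x ^ (2 * n) - cos x ^ (2 * S n))) 0 (PI/2)
     (9 * (RInt (fun x => cos x ^ (2 * n)) 0 (PI/2) - RInt (fun x => cos x ^ (2 * S n)) 0 (PI/2)))).
  { apply (is_RInt_scal (fun x => cos x ^ (2 * n) - cos x ^ (2 * S n))).
    apply (is_RInt_minus (fun x => cos x ^ (2 * n)) (fun x => cos x ^ (2 * S n))).
    exact (RInt_correct _ _ _ (exI n)). exact (RInt_correct _ _ _ (exI (S n))). }
  refine (is_RInt_le (fun x => x^2 * cos x ^ (2*n)) _ 0 (PI/2) _ _ _ _ H _). lra. exact (RInt_correct _ _ _ (exJ n)).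
  intros x Hx. cbv beta.
  replace (2 * S n)%nat with (S (S (2*n))) by lia. rewrite <- !tech_pow_Rmult.
  assert (Hs := sin2_cos2 x). unfold Rsqr in Hs.
  assert (Hx3 := x_le_3sin x ltac:(lra)).
  assert (0 <= cos x ^ (2*n)).
  { replace (2 * n)%nat with (n * 2)%nat by lia. rewrite pow_mult. apply pow2_ge_0. }
  assert (x * x <= 9 * (sin x * sin x)) by nra.
  replace (9 * (cos x ^ (2 * n) - cos x * (cos x * cos x ^ (2 * n)))) with
    (9 * (sin x * sin x) * cos x ^ (2 * n)) by nra.
  nra.
Qed.

Definition Db n : R := Jb n / Ib n.

Lemma Db_step n : Db n - Db (S n) = / (2 * (INR n + 1) ^ 2).
Proof.
unfold Db. assert (H1 := I_rec n). assert (H2 := J_rec n).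
assert (h0 := Ib_pos n). assert (h1 := Ib_pos (S n)). assert (0 <= INR n) by apply pos_INR.
assert (Jb n = (1 * Ib (S n) + 2 * (INR n + 1) ^ 2 * Jb (S n)) / ((INR n + 1) * (2 * INR n + 1))).
{ assert (E: Jb n * ((INR n+1)*(2*INR n+1)) = 1 * Ib (S n) + 2*(INR n+1)^2 * Jb (S n)) by lra.
  rewrite <- E. field. nra. }
rewrite H0.
rewrite I_rec'. field. repeat split; lra.
Qed.

Lemma H_sum N : sum_n_m (fun k => / INR k ^ 2) 1 N = PI ^ 2 / 6 - 2 * Db N.
Proof.
induction N.
- rewrite sum_n_m_zero by lia. unfold Db. rewrite I0, J0. unfold zero; simpl. field.
  generalize PI_RGT_0; lra.
- rewrite sum_n_Sm by lia. rewrite IHN. unfold plus; cbn -[INR pow Db]. rewrite S_INR.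
  assert (H := Db_step N). 
  assert (0 <= INR N) by apply pos_INR.
  replace (Db (S N)) with (Db N - / (2 * (INR N + 1) ^ 2)) by lra.
  field. lra.
Qed.

Lemma Db_bounds N : 0 <= Db N <= 9 / (2 * INR N + 2).
Proof.
unfold Db. assert (H := Jb_bounds N). assert (h0 := Ib_pos N). assert (H1 := I_rec N).
assert (0 <= INR N) by apply pos_INR.
split. apply Rdiv_le_0_compat; lra.
rewrite I_rec' in H.
apply Rmult_le_reg_r with (Ib N); auto. unfold Rdiv. rewrite Rmult_assoc, Rinv_l by lra.
replace (9 * / (2 * INR N + 2) * Ib N) with (9 * (Ib N - (2 * INR N + 1) / (2 * INR N + 2) * Ib N)).
lra. field. lra.
Qed.

Lemma lim_c_over_lin c : is_lim_seq (fun N => c / (2 * INR N + 2)) 0.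
Proof.
assert (H : is_lim_seq (fun N => 2 * INR N + 2) p_infty).
{ apply is_lim_seq_le_p_loc with INR. exists 0%nat; intros. generalize (pos_INR n); lra.
  apply is_lim_seq_INR. }
apply is_lim_seq_inv in H. 2: discriminate.
apply (is_lim_seq_scal_l _ c) in H. simpl in H. rewrite Rmult_0_r in H. exact H.
Qed.

Lemma basel_lim : is_lim_seq (fun N => sum_n_m (fun k => / INR k ^ 2) 1 N) (PI ^ 2 / 6).
Proof.
apply is_lim_seq_ext with (fun N => PI ^ 2 / 6 - 2 * Db N).
{ intros; rewrite H_sum; reflexivity. }
assert (H : is_lim_seq Db 0).
{ apply is_lim_seq_le_le with (fun _ => 0) (fun N => 9 / (2 * INR N + 2)).
  - intros; apply Db_bounds.
  - apply is_lim_seq_const.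
  - apply lim_c_over_lin. }
assert (H2 := is_lim_seq_minus' _ _ _ _ (is_lim_seq_const (PI^2/6)) (is_lim_seq_scal_l _ 2 _ H)).
simpl in H2. rewrite Rmult_0_r, Rminus_0_r in H2. exact H2.
Qed.

Lemma Rpower2 x : 0 < x -> Rpower x 2 = x ^ 2.
Proof. intros. replace 2 with (INR 2) at 1 by (simpl; ring). rewrite Rpower_pow; auto. Qed.

Lemma zeta2 : zeta 2 = PI ^ 2 / 6.
Proof.
unfold zeta. apply is_series_unique.
assert (H := basel_lim). apply is_lim_seq_incr_1 in H.
unfold is_series.
eapply filterlim_ext. 2: exact H.
intros N. simpl. unfold sum_n. rewrite <- sum_n_m_S.
apply sum_n_m_ext. intros k. rewrite Rpower2. rewrite S_INR. reflexivity.
generalize (pos_INR k); lra.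
Qed.

Definition Hs (N : nat) : R := sum_n_m (fun k => / INR k ^ 2) 1 N.

Lemma Hs_S N : Hs (S N) = Hs N + / (INR N + 1) ^ 2.
Proof. unfold Hs. rewrite sum_n_Sm by lia. rewrite S_INR. reflexivity. Qed.

Lemma Hs_ge0 N : 0 <= Hs N.
Proof.
induction N. unfold Hs. rewrite sum_n_m_zero by lia. unfold zero; simpl; lra.
rewrite Hs_S. assert (0 <= INR N) by apply pos_INR.
assert (0 < / (INR N + 1) ^ 2) by (apply Rinv_0_lt_compat; nra). lra.
Qed.

Lemma lnQ_bounds x N : 0 < x < 1 ->
  x ^ 2 * Hs N <= ln (/ Qp x N) <= x ^ 2 * Hs N / (1 - x ^ 2).
Proof.
intros Hx. assert (Hx2 : 0 < x ^ 2 < 1) by (split; nra).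
induction N.
- unfold Hs. rewrite sum_n_m_zero by lia. unfold zero; simpl. rewrite Rinv_1, ln_1. 
  replace (x * (x * 1) * 0 / (1 - x * (x * 1))) with 0 by (field; nra). lra.
- change (Qp x (S N)) with (Qp x N * (1 - x ^ 2 / (INR N + 1) ^ 2)).
  assert (Q := Qp_bounds x N Hx). assert (Q2 := Qp_bounds x (S N) Hx).
  change (Qp x (S N)) with (Qp x N * (1 - x ^ 2 / (INR N + 1) ^ 2)) in Q2.
  assert (0 <= INR N) by apply pos_INR.
  set (u := x ^ 2 / (INR N + 1) ^ 2) in *.
  assert (Hu : u = x ^ 2 * / (INR N + 1) ^ 2) by reflexivity.
  assert (Hu1 : u <= x ^ 2).
  { rewrite Hu. rewrite <- (Rmult_1_r (x ^ 2)) at 2. apply Rmult_le_compat_l. lra.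
    rewrite <- Rinv_1. apply Rinv_le_contravar. lra. nra. }
  assert (Hu0 : 0 < u) by (rewrite Hu; apply Rmult_lt_0_compat; [lra | apply Rinv_0_lt_compat; nra]).
  assert (0 < 1 - u) by lra.
  rewrite Rinv_mult, ln_mult by (apply Rinv_0_lt_compat; lra).
  rewrite (ln_Rinv (Qp x N)), (ln_Rinv (1 - u)) by lra. rewrite ln_Rinv in IHN by lra.
  rewrite Hs_S.
  assert (M := mln_bounds u ltac:(lra)).
  assert (u / (1 - u) <= x ^ 2 * / (INR N + 1) ^ 2 / (1 - x ^ 2)).
  { rewrite <- Hu. unfold Rdiv. apply Rmult_le_compat_l. lra. apply Rinv_le_contravar; lra. }
  replace (x ^ 2 * (Hs N + / (INR N + 1) ^ 2) / (1 - x ^ 2)) with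
    (x ^ 2 * Hs N / (1 - x ^ 2) + x ^ 2 * / (INR N + 1) ^ 2 / (1 - x ^ 2)) by (field; lra).
  rewrite Rmult_plus_distr_l. rewrite <- Hu. rewrite <- Hu in H1. lra.
Qed.

Lemma B_bounds x : 0 < x < 1 ->
  let V := x * Gamma_int x * Gamma_int (1 - x) in
  1 <= V /\ x ^ 2 * (PI ^ 2 / 6) <= ln V <= x ^ 2 * (PI ^ 2 / 6) / (1 - x ^ 2).
Proof.
intros Hx V. assert (Hx2 : 0 < x ^ 2 < 1) by (split; nra).
assert (L := Vlim x Hx). fold V in L.
assert (HV : 1 <= V).
{ assert (Hle : forall N, 1 <= / Qp x N).
  { intros N. destruct (Qp_bounds x N Hx). rewrite <- Rinv_1. apply Rinv_le_contravar; lra. }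
  exact (is_lim_seq_le (fun _ => 1) _ 1 V Hle (is_lim_seq_const 1) L). }
split; auto.
assert (LL : is_lim_seq (fun N => ln (/ Qp x N)) (ln V)).
{ apply (is_lim_seq_continuous ln). apply continuity_pt_filterlim. apply cont_of_der.
  eexists. apply is_derive_Reals, derivable_pt_lim_ln. lra. exact L. }
assert (LH := is_lim_seq_mult' _ _ _ _ (is_lim_seq_const (x ^ 2)) basel_lim).
assert (LH2 := is_lim_seq_mult' _ _ _ _ LH (is_lim_seq_const (/ (1 - x ^ 2)))).
split.
- assert (H := is_lim_seq_le _ _ _ _ (fun N => proj1 (lnQ_bounds x N Hx)) LH LL). exact H.
- assert (H := is_lim_seq_le _ _ _ _ (fun N => proj2 (lnQ_bounds x N Hx)) LL LH2).
  exact H.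
Qed.

Lemma up_nat (n : nat) (r : R) : INR n - 1 <= r < INR n -> up r = Z.of_nat n.
Proof.
intros H. symmetry. apply tech_up; rewrite <- INR_IZR_INZ; lra.
Qed.

Lemma Gm1 n x : 0 < x < 1 -> Gamma (- INR n - x) = Gamma_int (1 - x) / rising (- INR n - x) (S n).
Proof.
intros Hx. unfold Gamma. assert (0 <= INR n) by apply pos_INR.
destruct (Rlt_dec 0 (- INR n - x)). lra.
rewrite (up_nat (S n)). 2: rewrite S_INR; lra.
rewrite Nat2Z.id. f_equal. f_equal. rewrite S_INR; ring.
Qed.

Lemma Gm2 n x : 0 < x < 1 -> Gamma (- INR n + x) = Gamma_int x / rising (x - INR n) n.
Proof.
intros Hx. unfold Gamma. destruct n.
- simpl INR. destruct (Rlt_dec 0 (- 0 + x)). simpl rising. replace (- 0 + x) with x by ring. field. lra.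
- assert (0 <= INR n) by apply pos_INR. rewrite S_INR.
  destruct (Rlt_dec 0 (- (INR n + 1) + x)). lra.
  rewrite (up_nat (S n)). 2: rewrite S_INR; lra.
  rewrite Nat2Z.id. rewrite S_INR. replace (- (INR n + 1) + x + (INR n + 1)) with x by ring. replace (- (INR n + 1) + x) with (x - (INR n + 1)) by ring. reflexivity.
Qed.

Lemma rise1 n x : rising (- INR n - x) (S n) = (-1) ^ (S n) * rising x (S n).
Proof.
induction n.
- simpl. ring.
- rewrite rising_shift. replace (- INR (S n) - x + 1) with (- INR n - x) by (rewrite S_INR; ring).
  rewrite IHn. change (rising x (S (S n))) with (rising x (S n) * (x + INR (S n))).
  rewrite S_INR. simpl pow. ring.
Qed.

Lemma rise2 n x : rising (x - INR n) n = (-1) ^ n * rising (1 - x) n.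
Proof.
induction n.
- simpl. ring.
- rewrite rising_shift. replace (x - INR (S n) + 1) with (x - INR n) by (rewrite S_INR; ring).
  rewrite IHn. change (rising (1 - x) (S n)) with (rising (1 - x) n * (1 - x + INR n)).
  rewrite S_INR. simpl pow. ring.
Qed.

Lemma abs_div_sign a r k : 0 < r -> Rabs (a / ((-1) ^ k * r)) = Rabs a / r.
Proof.
intros Hr. unfold Rdiv. rewrite Rabs_mult, Rabs_inv, Rabs_mult, pow_1_abs, (Rabs_right r) by lra. rewrite Rmult_1_l; reflexivity.
Qed.

Definition cc (n : nat) (x : R) : R := ln (/ Qp x n) - x ^ 2 * Hs n.

Lemma Gi_pos x : 0 < x < 1 -> 0 < Gamma_int x /\ 0 < Gamma_int (1 - x).
Proof.
intros Hx. destruct (B_bounds x Hx) as [HV _].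
rewrite Gamma_int_val, Gamma_int_val in * by lra.
assert (G1 := Gs_ge0 x ltac:(lra)). assert (G2 := Gs_ge0 (1 - x) ltac:(lra)).
assert (Gs x * Gs (1 - x) > 0).
{ replace (x * (Gs x / x) * (Gs (1 - x) / (1 - x))) with (Gs x * Gs (1 - x) / (1 - x)) in HV by (field; lra).
  apply Rmult_le_compat_r with (r := 1 - x) in HV. 2: lra.
  unfold Rdiv in HV. rewrite Rmult_assoc, Rinv_l, Rmult_1_r in HV by lra. lra. }
destruct (Rle_lt_or_eq_dec 0 (Gs x) G1) as [P1|P1].
2: { rewrite <- P1 in H. lra. }
destruct (Rle_lt_or_eq_dec 0 (Gs (1 - x)) G2) as [P2|P2].
2: { rewrite <- P2 in H. lra. }
split; apply Rdiv_lt_0_compat; lra.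
Qed.

Lemma A_decomp n x : 0 < x < 1 -> A n x = ln (x * Gamma_int x * Gamma_int (1 - x)) + cc n x.
Proof.
intros Hx. destruct (Gi_pos x Hx) as [P1 P2].
unfold A, cc. fold (Hs n).
rewrite Gm1, Gm2, rise1, rise2 by auto.
assert (R1 := rising_pos x (S n) ltac:(lra)). assert (R2 := rising_pos (1 - x) n ltac:(lra)).
assert (R3 := rising_pos (x + 1) n ltac:(lra)).
rewrite !abs_div_sign by auto. rewrite !Rabs_right by lra.
assert (F0 : 0 < INR (fact n)) by (apply lt_0_INR, lt_O_fact).
assert (Q := Qp_bounds x n Hx).
assert (E : 2 * ln (INR (fact n) * x) + ln (Gamma_int (1 - x) / rising x (S n)) + ln (Gamma_int x / rising (1 - x) n)
   = ln ((INR (fact n) * x) * (INR (fact n) * x) * (Gamma_int (1 - x) / rising x (S n)) * (Gamma_int x / rising (1 - x) n))).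
{ set (a := INR (fact n) * x). set (b := Gamma_int (1 - x) / rising x (S n)). set (c := Gamma_int x / rising (1 - x) n).
  assert (Pa : 0 < a) by (unfold a; nra). assert (Pb : 0 < b) by (unfold b; apply Rdiv_lt_0_compat; lra).
  assert (Pc : 0 < c) by (unfold c; apply Rdiv_lt_0_compat; lra).
  assert (Paa : 0 < a * a) by nra. assert (Paab : 0 < a * a * b) by nra.
  rewrite (ln_mult _ _ Paab Pc), (ln_mult _ _ Paa Pb), (ln_mult _ _ Pa Pa). ring. }
rewrite E.
assert (E2 : ln (x * Gamma_int x * Gamma_int (1 - x)) + ln (/ Qp x n) = ln (x * Gamma_int x * Gamma_int (1 - x) * / Qp x n)).
{ assert (PV : 0 < x * Gamma_int x * Gamma_int (1 - x)) by (repeat apply Rmult_lt_0_compat; lra).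
  assert (PQ : 0 < / Qp x n) by (apply Rinv_0_lt_compat; lra).
  rewrite (ln_mult _ _ PV PQ). reflexivity. }
replace (ln (x * Gamma_int x * Gamma_int (1 - x)) + (ln (/ Qp x n) - x ^ 2 * Hs n)) with
  (ln (x * Gamma_int x * Gamma_int (1 - x)) + ln (/ Qp x n) - x ^ 2 * Hs n) by ring.
rewrite E2. f_equal. f_equal.
rewrite rising_shift. assert (HQ := rising_Q x n).
field_simplify_eq.
- replace (x * Gamma_int (1 - x) * rising (x + 1) n * Gamma_int x * rising (1 - x) n) with
    (x * Gamma_int (1 - x) * Gamma_int x * (rising (x + 1) n * rising (1 - x) n)) by ring.
  rewrite HQ. ring.
- repeat split; lra.
Qed.

Lemma mvt_ln u : 0 < u < 1 -> u ^ 2 / 2 <= - ln (1 - u) - u <= u ^ 2 / 2 + u ^ 3 / (1 - u).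
Proof.
intros Hu.
set (h := fun t => - ln (1 - t) - t - t ^ 2 / 2).
assert (Hd : forall c, 0 <= c <= u -> derivable_pt_lim h c (c ^ 2 / (1 - c))).
{ intros c Hc. apply is_derive_Reals. unfold h. auto_derive. lra.
  field. lra. }
destruct (MVT_cor2 h (fun c => c ^ 2 / (1 - c)) 0 u ltac:(lra) Hd) as [c [Hc1 Hc2]].
unfold h in Hc1. replace (1 - 0) with 1 in Hc1 by ring. rewrite ln_1 in Hc1.
assert (E : - ln (1 - u) - u = u ^ 2 / 2 + c ^ 2 / (1 - c) * u) by (replace (c ^ 2 / (1 - c) * u) with (c ^ 2 / (1 - c) * (u - 0)) by ring; rewrite <- Hc1; field).
rewrite E. split.
- assert (0 <= c ^ 2 / (1 - c) * u). apply Rmult_le_pos; try lra. apply Rdiv_le_0_compat. nra. lra. lra.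
- assert (c ^ 2 / (1 - c) <= u ^ 2 / (1 - u)).
  { unfold Rdiv. apply Rmult_le_compat. nra. apply Rlt_le, Rinv_0_lt_compat; lra.
    apply pow_incr; lra. apply Rinv_le_contravar; lra. }
  assert (c ^ 2 / (1 - c) * u <= u ^ 2 / (1 - u) * u) by (apply Rmult_le_compat_r; lra).
  replace (u ^ 3 / (1 - u)) with (u ^ 2 / (1 - u) * u) by (field; lra). lra.
Qed.

Lemma cc_step n x : 0 < x < 1 ->
  cc (S n) x - cc n x = - ln (1 - x ^ 2 / (INR n + 1) ^ 2) - x ^ 2 / (INR n + 1) ^ 2.
Proof.
intros Hx. unfold cc. rewrite Hs_S.
change (Qp x (S n)) with (Qp x n * (1 - x ^ 2 / (INR n + 1) ^ 2)).
assert (Q := Qp_bounds x n Hx). assert (Q2 := Qp_bounds x (S n) Hx).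
change (Qp x (S n)) with (Qp x n * (1 - x ^ 2 / (INR n + 1) ^ 2)) in Q2.
assert (0 <= INR n) by apply pos_INR.
set (u := x ^ 2 / (INR n + 1) ^ 2) in *.
assert (0 < 1 - u) by nra.
rewrite Rinv_mult, ln_mult by (apply Rinv_0_lt_compat; lra).
rewrite (ln_Rinv (1 - u)) by lra. unfold u. field. lra.
Qed.

Lemma cc_bounds n x : 0 < x < 1 -> 0 <= cc n x <= x ^ 4 * Hs n / (1 - x ^ 2).
Proof.
intros Hx. unfold cc. destruct (lnQ_bounds x n Hx) as [H1 H2].
assert (0 < x ^ 2 < 1) by (split; nra).
split. lra.
replace (x ^ 4 * Hs n / (1 - x ^ 2)) with (x ^ 2 * Hs n / (1 - x ^ 2) - x ^ 2 * Hs n) by (field; lra).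
lra.
Qed.

Definition lo (m zt H : R) (x : R) : R := (1 - x ^ 2) / (2 * m ^ 4 * (zt + x ^ 2 * H)).
Definition hi (m zt : R) (x : R) : R := (1 / (2 * m ^ 4) + x ^ 2 / (m ^ 6 * (1 - x ^ 2 / m ^ 2))) / zt.

Lemma f_bounds n x : 0 < x < 1 / 2 ->
  let m := INR n + 1 in let zt := PI ^ 2 / 6 in
  lo m zt (Hs (S n)) x <= / x ^ 2 * (1 - A n x / A (S n) x) <= hi m zt x.
Proof.
intros Hx m zt.
assert (Hx1 : 0 < x < 1) by lra.
assert (Hm : 1 <= m) by (unfold m; generalize (pos_INR n); lra).
assert (Hz : 0 < zt) by (unfold zt; generalize PI_RGT_0; intros; apply Rdiv_lt_0_compat; nra).
rewrite !A_decomp by auto.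
destruct (B_bounds x Hx1) as [HV [HL1 HL2]]. fold zt in HL1, HL2.
set (L := ln (x * Gamma_int x * Gamma_int (1 - x))) in *.
assert (St := cc_step n x Hx1). fold m in St.
destruct (cc_bounds (S n) x Hx1) as [C1 C2].
assert (HH := Hs_ge0 (S n)).
set (u := x ^ 2 / m ^ 2) in *.
assert (Hx2 : 0 < x ^ 2 < 1 / 4) by (split; nra).
assert (Hu : 0 < u <= x ^ 2).
{ unfold u. split. apply Rdiv_lt_0_compat; nra.
  unfold Rdiv. rewrite <- (Rmult_1_r (x ^ 2)) at 2. apply Rmult_le_compat_l. lra.
  rewrite <- Rinv_1. apply Rinv_le_contravar. lra. nra. }
destruct (mvt_ln u ltac:(lra)) as [M1 M2].
set (D := cc (S n) x - cc n x) in *.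
set (A1 := L + cc (S n) x).
assert (PA1 : x ^ 2 * zt <= A1) by (unfold A1; nra).
assert (PA1' : 0 < A1) by nra.
assert (A1hi : A1 <= x ^ 2 * (zt + x ^ 2 * Hs (S n)) / (1 - x ^ 2)).
{ unfold A1. replace (x ^ 2 * (zt + x ^ 2 * Hs (S n)) / (1 - x ^ 2)) with
   (x ^ 2 * zt / (1 - x ^ 2) + x ^ 4 * Hs (S n) / (1 - x ^ 2)) by (field; lra). lra. }
assert (E : / x ^ 2 * (1 - (L + cc n x) / A1) = D / (x ^ 2 * A1)) by (unfold D, A1; field; split; nra).
rewrite E.
assert (Eu2 : u ^ 2 = x ^ 4 / m ^ 4) by (unfold u; field; lra).
assert (Pm4 : 0 < m ^ 4) by (apply pow_lt; lra).
split.
- unfold lo. 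
  assert (Pd : 0 < zt + x ^ 2 * Hs (S n)) by nra.
  apply Rle_trans with ((x ^ 4 / (2 * m ^ 4)) / (x ^ 2 * A1)).
  + apply Rmult_le_reg_r with (x ^ 2 * A1). nra.
    replace (x ^ 4 / (2 * m ^ 4) / (x ^ 2 * A1) * (x ^ 2 * A1)) with (x ^ 4 / (2 * m ^ 4)) by (field; split; nra).
    apply Rle_trans with ((1 - x ^ 2) / (2 * m ^ 4 * (zt + x ^ 2 * Hs (S n))) * (x ^ 2 * (x ^ 2 * (zt + x ^ 2 * Hs (S n)) / (1 - x ^ 2)))).
    apply Rmult_le_compat_l. apply Rdiv_le_0_compat. lra. apply Rmult_lt_0_compat; lra.
    apply Rmult_le_compat_l; nra.
    right. field. repeat split; nra.
  + unfold Rdiv. apply Rmult_le_compat_r. apply Rlt_le, Rinv_0_lt_compat; nra.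
    assert (x ^ 4 * / (2 * m ^ 4) = u ^ 2 / 2) by (rewrite Eu2; field; nra). lra.
- unfold hi.
  apply Rle_trans with ((u ^ 2 / 2 + u ^ 3 / (1 - u)) / (x ^ 2 * A1)).
  + unfold Rdiv. apply Rmult_le_compat_r. apply Rlt_le, Rinv_0_lt_compat; nra. lra.
  + apply Rle_trans with ((u ^ 2 / 2 + u ^ 3 / (1 - u)) / (x ^ 2 * (x ^ 2 * zt))).
    * assert (P3 : 0 < u ^ 3 / (1 - u)) by (apply Rdiv_lt_0_compat; [apply pow_lt; lra | lra]).
      assert (P4 : 0 < u ^ 2) by (apply pow_lt; lra).
      assert (P : 0 <= u ^ 2 / 2 + u ^ 3 / (1 - u)) by lra.
      unfold Rdiv in P |- *. apply Rmult_le_compat_l. exact P.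
      apply Rinv_le_contravar. apply Rmult_lt_0_compat; [lra | apply Rmult_lt_0_compat; lra]. apply Rmult_le_compat_l; lra.
    * right. unfold u. field. repeat split; nra.
Qed.

Theorem mainTheorem5 (n : nat) :
  filterlim (fun x => / x ^ 2 * (1 - A n x / A (S n) x)) (at_right 0)
    (locally (3 / ((INR n + 1) ^ 4 * PI ^ 2)))
  /\ 3 / ((INR n + 1) ^ 4 * PI ^ 2) = 1 / (2 * (INR n + 1) ^ 4 * zeta 2).
Proof.
assert (HP := PI_RGT_0).
assert (Hm : 1 <= INR n + 1) by (generalize (pos_INR n); lra).
assert (Pm4 : 0 < (INR n + 1) ^ 4) by (apply pow_lt; lra).
split.
- set (m := INR n + 1) in *. set (zt := PI ^ 2 / 6).
  assert (Hz : 0 < zt) by (unfold zt; apply Rdiv_lt_0_compat; nra).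
  set (H := Hs (S n)). assert (HH : 0 <= H) by apply Hs_ge0.
  assert (E1 : lo m zt H 0 = 3 / (m ^ 4 * PI ^ 2)) by (unfold lo, zt; field; split; nra).
  assert (E2 : hi m zt 0 = 3 / (m ^ 4 * PI ^ 2)) by (unfold hi, zt; field; split; nra).
  assert (Hlo : filterlim (lo m zt H) (at_right 0) (Rbar_locally (3 / (m ^ 4 * PI ^ 2)))).
  { rewrite <- E1. eapply filterlim_filter_le_1. apply filter_le_within.
    change (continuous (lo m zt H) 0). apply cont_of_der. unfold lo. auto_derive. nra. }
  assert (Hhi : filterlim (hi m zt) (at_right 0) (Rbar_locally (3 / (m ^ 4 * PI ^ 2)))).
  { rewrite <- E2. eapply filterlim_filter_le_1. apply filter_le_within.
    change (continuous (hi m zt) 0). apply cont_of_der. unfold hi. auto_derive. repeat split; nra. }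
  change (filterlim (fun x => / x ^ 2 * (1 - A n x / A (S n) x)) (at_right 0) (Rbar_locally (Finite (3 / (m ^ 4 * PI ^ 2))))).
  apply (filterlim_le_le (lo m zt H) _ (hi m zt)); auto.
  apply at_right_delta with (1 / 2). lra.
  intros x Hx. apply f_bounds. lra.
- rewrite zeta2. field. split; nra.
Qed.
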